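(* Suppose $\mathrm{char}\,\mathbb{F}=2$ and let $C$ be an $A$-code of length $2$ with canonical generator matrix $\begin{pmatrix}g_1&g_2\\0&g_3\end{pmatrix}$, where $g_1,g_3$ are nonzero monic divisors of $f$, $g_3\mid (f/g_1)g_2$ in $\mathbb{F}[x]$ and $\deg g_2<\deg g_3$. Then $C$ is self-dual ($C=C^\perp$) if and only if either (i) $g_1=g_3$, $g_2=0$ and $f=g_1^2$; or (ii) $f=g_1^2f'$, $g_3=g_1f'$ and $g_2=g_1\bigl(h\sqrt[2]{f'}+1\bigr)$ for some $f',h\in\mathbb{F}[x]$ with $\deg h<\deg f'-\deg\sqrt[2]{f'}$.
   Context: Let $\mathbb{F}$ be a finite field, $f(x)\in\mathbb{F}[x]$ monic of degree $m$, $A=\mathbb{F}[x]/\langle f(x)\rangle$, elements identified with polynomials of degree $<m$. An $A$-code of length $l$ is an $A$-submodule of $A^l$; $C^\perp=\{a\in A^l:\sum_ia_ic_i=0\ \forall c\in C\}$. The canonical generator matrix (CGM) of a nonzero $A$-code $C$ is the unique matrix over $A$ whose rows generate $C$, are monic with strictly increasing leading indices (position of first nonzero entry), have leading entries dividing $f$, satisfy that $(f/L_i)\cdot(\text{row }i)$ is an $A$-combination of later rows ($L_i$ the leading entry of row $i$), and such that every entry above a leading entry has smaller degree than it. For $h\in\mathbb{F}[x]$ with prime factorization $h=p_1^{a_1}\cdots p_t^{a_t}$ (monic irreducible $p_i$), $\sqrt[2]{h}=p_1^{\lceil a_1/2\rceil}\cdots p_t^{\lceil a_t/2\rceil}$.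 *)

(* Defs.v *)
From HB Require Import structures.
From mathcomp Require Import all_boot all_order all_algebra.
From Stdlib Require Import ClassicalEpsilon.
Set Implicit Arguments. Unset Strict Implicit. Unset Printing Implicit Defensive.
Import GRing.Theory.
Local Open Scope ring_scope.

Section Defs.
Variable F : fieldType.

(* Elements of A = F[x]/<f> are identified with polynomials of size < size f,
   i.e. of degree < m = deg f. *)
Definition inA (f u : {poly F}) : Prop := (size u < size f)%N.

Definition code2 := {poly F} * {poly F} -> Prop.

Definition code_of_rows (f g1 g2 g3 : {poly F}) : code2 :=
  fun c => exists a b : {poly F},
      c = ((a * g1) %% f, (a * g2 + b * g3) %% f).

Definition dual_code (f : {poly F}) (C : code2) : code2 :=
  fun c => [/\ inA f c.1, inA f c.2 &
             forall d, C d -> (c.1 * d.1 + c.2 * d.2) %% f = 0].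

Definition self_dual (f : {poly F}) (C : code2) : Prop :=
  forall c, C c <-> dual_code f C c.

(* Multiplicity of p in h (meaningful for h != 0 and p nonconstant). *)
Definition pmult (p h : {poly F}) : nat :=
  (
  \max_(k < size h | (p ^+ k %| h)%R) k)%N.

Definition sqrt2 (h : {poly F}) : {poly F} :=
  epsilon (inhabits 0) (fun r : {poly F} => r \is monic /\
    forall p : {poly F}, p \is monic -> irreducible_poly p ->
      pmult p r = uphalf (pmult p h)).

End Defs.

(* Main.v *)
Require Import Defs.
From HB Require Import structures.
From mathcomp Require Import all_boot all_order all_algebra.
From Stdlib Require Import Classical ClassicalEpsilon.
From mathcomp Require Import zify ring.
Set Implicit Arguments. Unset Strict Implicit.
Import GRing.Theory.
Local Open Scope ring_scope.

Section Mult.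
Variable F : fieldType.
Implicit Types p q x y h : {poly F}.

Lemma exp_size p k x : x != 0 -> (1 < size p)%N -> p ^+ k %| x -> (k < size x)%N.
Proof.
move=> x0 sp d; have := dvdp_leq x0 d.
have := size_exp p k; have : size (p ^+ k) != 0%N.
  by rewrite size_poly_eq0 expf_neq0 // -size_poly_gt0 ltnW.
move: (size (p ^+ k)) (size p) (size x) sp => a b c sp a0 e le.
have : (k <= b.-1 * k)%N by rewrite leq_pmull //; lia.
lia.
Qed.

Lemma pmult_dvd p x : p ^+ pmult p x %| x.
Proof.
rewrite /pmult; elim/big_ind: _ => //; first by rewrite expr0 dvd1p.
by move=> m1 m2 h1 h2; rewrite /maxn; case: ltnP.
Qed.

Lemma pmultP p x k : x != 0 -> (1 < size p)%N -> (p ^+ k %| x) = (k <= pmult p x)%N.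
Proof.
move=> x0 sp; apply/idP/idP => H.
  have kx := exp_size x0 sp H.
  exact: (leq_bigmax_cond (Ordinal kx) H).
exact: dvdp_trans (dvdp_exp2l p H) (pmult_dvd p x).
Qed.

Lemma pmult_small p x : (size x <= 1)%N -> pmult p x = 0%N.
Proof.
move=> sx; apply/eqP; rewrite -leqn0; apply/bigmax_leqP => i _.
have := ltn_ord i; lia.
Qed.

Lemma irr_prime p x y : irreducible_poly p -> p %| x * y -> (p %| x) || (p %| y).
Proof.
move=> ip d; case px: (p %| x) => //=.
have cp : coprimep p x.
  case: (irredp_XsubCP ip (dvdp_gcdl p x)) => e.
    by rewrite coprimep_def (eqp_size e) size_poly1.
  by move: px; rewrite -(eqp_dvdl _ e) dvdp_gcdr.
by rewrite -(Gauss_dvdpr y cp).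
Qed.

Lemma pmult_split p x : irreducible_poly p -> x != 0 ->
  exists x', x = x' * p ^+ pmult p x /\ ~~ (p %| x').
Proof.
move=> ip x0; have sp := ip.1.
have /dvdpP [x' ex] := pmult_dvd p x.
exists x'; split => //; apply/negP => /dvdpP [x'' ex'].
have : p ^+ (pmult p x).+1 %| x.
  move: ex; set m := pmult p x => ex.
  by rewrite ex ex' exprSr; apply/dvdpP; exists x''; ring.
by rewrite pmultP // ltnn.
Qed.

Lemma pmultM p x y : irreducible_poly p -> x != 0 -> y != 0 ->
  pmult p (x * y) = (pmult p x + pmult p y)%N.
Proof.
move=> ip x0 y0; have sp := ip.1; have xy0 : x * y != 0 by rewrite mulf_neq0.
have [x' [ex nx]] := pmult_split ip x0.
have [y' [ey ny]] := pmult_split ip y0.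
apply/eqP; rewrite eqn_leq; apply/andP; split; last first.
  by rewrite -pmultP // exprD dvdp_mul // pmult_dvd.
rewrite leqNgt; apply/negP => lt.
have : p ^+ (pmult p x + pmult p y).+1 %| x * y by rewrite pmultP.
have pn0 : p ^+ (pmult p x + pmult p y) != 0 by rewrite expf_neq0 // irredp_neq0.
rewrite {2}ex {2}ey.
have -> : x' * p ^+ pmult p x * (y' * p ^+ pmult p y) = (x' * y') * p ^+ (pmult p x + pmult p y)
  by rewrite exprD; ring.
rewrite exprSr mulrC dvdp_mul2r //.
by move/(irr_prime ip); rewrite (negPf nx) (negPf ny).
Qed.

Lemma pmult_le p x y : (1 < size p)%N -> y != 0 -> x %| y -> (pmult p x <= pmult p y)%N.
Proof. by move=> sp y0 d; rewrite -pmultP //; exact: dvdp_trans (pmult_dvd p x) d. Qed.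

Lemma monic_scale x : x != 0 -> (lead_coef x)^-1 *: x \is monic.
Proof.
by move=> x0; apply/monicP; rewrite lead_coefZ mulVf // lead_coef_eq0.
Qed.

Lemma irr_div x : (1 < size x)%N ->
  exists p, [/\ p \is monic, irreducible_poly p & p %| x].
Proof.
move: {2}(size x) (leqnn (size x)) => n; elim: n x => [|n IH] x sx s1; first by lia.
have x0 : x != 0 by rewrite -size_poly_gt0; lia.
have l0 : (lead_coef x)^-1 != 0 by rewrite invr_eq0 lead_coef_eq0.
case: (classic (irreducible_poly x)) => ix.
  exists ((lead_coef x)^-1 *: x); split; first exact: monic_scale.
    split; first by rewrite size_scale.
    move=> q sq; rewrite dvdpZr // => /(apply_irredp ix sq) e.
    by apply: eqp_trans e _; rewrite eqp_sym eqp_scale.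
  by rewrite dvdpZl.
have : exists q, [/\ size q != 1%N, q %| x & ~~ (q %= x)].
  apply: NNPP => nq; apply: ix; split => // q sq dq.
  apply: NNPP => nqx; apply: nq; exists q; split => //; exact/negP.
move=> [q [sq dq nqx]].
have q0 : q != 0 by apply: contraNneq x0 => q0; move: dq; rewrite q0 dvd0p.
have := dvdp_leq x0 dq; have := dvdp_size_eqp dq; rewrite (negPf nqx) => /negbT ne le.
have sq0 : size q != 0%N by rewrite size_poly_eq0.
have h1 : (size q <= n)%N by move: (size q) (size x) sx ne le => a b; lia.
have h2 : (1 < size q)%N by move: (size q) sq sq0 => a; lia.
have [p [mp ip dp]] := IH q h1 h2.
by exists p; split => //; exact: dvdp_trans dp dq.
Qed.

Lemma dvd_mult x y : x != 0 -> y != 0 ->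
  (forall p, p \is monic -> irreducible_poly p -> (pmult p x <= pmult p y)%N) -> x %| y.
Proof.
move: {2}(size x) (leqnn (size x)) => n; elim: n x y => [|n IH] x y sx x0 y0 H.
  by move: x0; rewrite -size_poly_gt0; lia.
case: (leqP (size x) 1) => s1.
  have : size x == 1%N by rewrite -size_poly_gt0 in x0; apply/eqP; lia.
  by rewrite -dvdp1 => d1; apply: dvdp_trans d1 (dvd1p _).
have [p [mp ip dp]] := irr_div s1; have sp := ip.1.
have d1 : (1 <= pmult p x)%N by rewrite -(pmultP 1 x0 sp) expr1.
have dy : p %| y by rewrite -[p]expr1 pmultP //; exact: leq_trans d1 (H p mp ip).
move: dp dy => /dvdpP [x1 ex] /dvdpP [y1 ey].
have p0 : p != 0 by exact: irredp_neq0.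
have x10 : x1 != 0 by apply: contraNneq x0 => e; rewrite ex e mul0r.
have y10 : y1 != 0 by apply: contraNneq y0 => e; rewrite ey e mul0r.
rewrite ex ey dvdp_mul2r //; apply: IH => //.
  by move: sx; rewrite ex size_mul //; move: (size x1) (size p) sp => a b; lia.
move=> q mq iq; have := H q mq iq; rewrite ex ey !pmultM //; lia.
Qed.

Lemma uphalf_add2 b a : uphalf (b + 2 * a) = (uphalf b + a)%N.
Proof. elim: a => [|a IH]; first by rewrite muln0 addn0 addn0.
by rewrite mulnS addnCA add2n /= -/(uphalf (b + 2 * a)) IH addnS. Qed.

Lemma uphalf_le n : (n <= 2 * uphalf n)%N.
Proof. have := odd_double_half n; rewrite uphalf_half -muln2; case: (odd n) => /=; lia. Qed.

Lemma uphalf_min n k : (n <= 2 * k)%N -> (uphalf n <= k)%N.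
Proof. have := odd_double_half n; rewrite uphalf_half -muln2; case: (odd n) => /=; lia. Qed.

Definition sqspec h r := r \is monic /\
    forall p : {poly F}, p \is monic -> irreducible_poly p ->
      pmult p r = uphalf (pmult p h).

Lemma sqrt2_ex h : h != 0 -> exists r, sqspec h r.
Proof.
move: {2}(size h) (leqnn (size h)) => n; elim: n h => [|n IH] h sh h0.
  by move: h0; rewrite -size_poly_gt0; lia.
case: (leqP (size h) 1) => s1.
  exists 1; split; first exact: monic1.
  by move=> p _ _; rewrite !pmult_small // size_poly1.
have [p [mp ip dp]] := irr_div s1; have sp := ip.1.
have p0 : p != 0 by exact: irredp_neq0.
move: dp => /dvdpP [h1 eh].
have h10 : h1 != 0 by apply: contraNneq h0 => e; rewrite eh e mul0r.
have sh1 : (size h1 <= n)%N by move: sh; rewrite eh size_mul //; move: (size h1) (size p) sp => a b; lia.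
case ph1 : (p %| h1).
  move: ph1 => /dvdpP [h2 eh2].
  have h20 : h2 != 0 by apply: contraNneq h10 => e; rewrite eh2 e mul0r.
  have [r2 [mr2 Hr2]] := IH h2 ltac:(move: sh1; rewrite eh2 size_mul //; move: (size h2) (size p) sp => a b; lia) h20.
  exists (r2 * p); split; first by rewrite monicMr.
  move=> q mq iq; rewrite eh eh2 !pmultM ?mulf_neq0 // ?monic_neq0 // Hr2 //.
  by rewrite -addnA addnn -muln2 mulnC uphalf_add2.
have [r1 [mr1 Hr1]] := IH h1 sh1 h10.
exists (r1 * p); split; first by rewrite monicMr.
move=> q mq iq; rewrite eh !pmultM // ?(monic_neq0 mr1) // Hr1 //.
case e: (pmult q p) => [|k]; first by rewrite !addn0.
have dqp : q %| p by have := pmultP 1 p0 iq.1; rewrite expr1 e => ->.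
have qp : q = p.
  apply/eqP; rewrite -eqp_monic //; apply: ip => //.
  by rewrite neq_ltn iq.1 orbT.
subst q.
have k0 : k = 0%N.
  case: k e => // k e; have : (p ^+ 2 %| p) by rewrite pmultP // e.
  move/(dvdp_leq p0); have := size_exp p 2; have := ip.1.
  have : size (p ^+ 2) != 0%N by rewrite size_poly_eq0 expf_neq0.
  move: (size (p ^+ 2)) (size p) => a b; lia.
have m0 : pmult p h1 = 0%N.
  by apply/eqP; rewrite -leqn0 leqNgt -(pmultP 1 h10 sp) expr1 ph1.
by rewrite k0 m0.
Qed.

Lemma sqrt2_spec h : h != 0 -> sqspec h (sqrt2 h).
Proof. move=> h0; exact: (@epsilon_spec _ (inhabits 0) (sqspec h) (sqrt2_ex h0)). Qed.

Lemma sqrt2_dvd h : h != 0 -> h %| sqrt2 h ^+ 2.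
Proof.
move=> h0; have [ms Hs] := sqrt2_spec h0; have s0 := monic_neq0 ms.
apply: dvd_mult => //; first by rewrite expf_neq0.
move=> p mp ip; rewrite expr2 pmultM // Hs // addnn -muln2 mulnC; exact: uphalf_le.
Qed.

Lemma sqrt2_min h k : h != 0 -> h %| k ^+ 2 -> sqrt2 h %| k.
Proof.
move=> h0 d; have [ms Hs] := sqrt2_spec h0; have s0 := monic_neq0 ms.
have [->|k0] := eqVneq k 0; first exact: dvdp0.
apply: dvd_mult => // p mp ip; rewrite Hs //; apply: uphalf_min.
have := pmult_le ip.1 (expf_neq0 2 k0) d.
by rewrite expr2 pmultM // addnn -muln2 mulnC.
Qed.

End Mult.

Section Code.
Variable F : fieldType.
Hypothesis c2F : 2%N \in [pchar F].
Let cP : 2%N \in [pchar {poly F}]. Proof. by rewrite pchar_poly. Qed.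
Implicit Types x y z f : {poly F}.

Lemma xx x : x + x = 0. Proof. exact: addrr_pchar2 cP x. Qed.

Lemma dvdp_eqr d x y : x = y -> d %| x -> d %| y. Proof. by move=> ->. Qed.

Lemma dvdp_eqr' d x y : d %| x -> x = y -> d %| y. Proof. by move=> ? <-. Qed.

Lemma dvdp_cong d d' x y : d %| x -> d = d' -> x = y -> d' %| y. Proof. by move=> ? <- <-. Qed.

Lemma dvd_mod2 f x y z w :
  (f %| x %% f * (y %% f) + z %% f * (w %% f)) = (f %| x * y + z * w).
Proof.
have modM a b : (a %% f * (b %% f)) %% f = (a * b) %% f.
  by rewrite modp_mul mulrC modp_mul mulrC.
by rewrite /dvdp modpD !modM -modpD.
Qed.

Lemma dvd_mod2r f x y z w :
  (f %| x * (y %% f) + z * (w %% f)) = (f %| x * y + z * w).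
Proof. by rewrite /dvdp modpD !modp_mul -modpD. Qed.

Lemma mod_dvd d f x : d %| f -> (d %| x %% f) = (d %| x).
Proof.
move=> df; rewrite {2}(divp_eq x f) dvdp_addr //; exact: dvdp_mull.
Qed.

Lemma mod_eq_dvd d f x y : x %% f = y %% f -> d %| f -> (d %| x) = (d %| y).
Proof. by move=> e df; rewrite -(mod_dvd x df) e mod_dvd. Qed.

Lemma sd_form f g1 g2 g3 f' w : f != 0 -> f = g1 ^+ 2 * f' -> g3 = g1 * f' ->
  g2 = g1 * w -> f' %| (1 + w) ^+ 2 -> self_dual f (code_of_rows f g1 g2 g3).
Proof.
move=> f0 ef e3 e2 dw.
have g10 : g1 != 0 by apply: contraNneq f0 => e; rewrite ef e expr0n mul0r.
have g20 : g1 ^+ 2 != 0 by rewrite expf_neq0.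
move=> [c1 c2]; split.
  case=> a [b [-> ->]]; split; rewrite /inA /= ?ltn_modp //.
  move=> d [a' [b' ->]] /=; apply/modp_eq0P; rewrite dvd_mod2.
  apply: (dvdp_eqr (x := g1 ^+ 2 * (a * a' * (1 + w) ^+ 2 + f' * (a * b' * w + b * a' * w + b * b' * f'))
     - a * a' * g1 ^+ 2 * (w + w))).
    by rewrite e3 e2; ring.
  by rewrite xx mulr0 subr0 ef dvdp_mul2l // dvdp_add //; [exact: dvdp_mull | exact: dvdp_mulr (dvdpp _)].
case=> /= s1 s2 Hd.
have H2 := Hd _ (ex_intro _ 0 (ex_intro _ 1 erefl)).
have H1 := Hd _ (ex_intro _ 1 (ex_intro _ 0 erefl)).
move: H1 H2 => /= /modp_eq0P H1 /modp_eq0P H2.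
rewrite dvd_mod2r in H1; rewrite dvd_mod2r in H2.
have : g1 * (g1 * f') %| c2 * (g1 * f').
  by apply: (dvdp_cong H2); rewrite ?ef ?e3; ring.
have gf0 : g1 * f' != 0 by apply: contraNneq f0 => e; rewrite ef expr2 -mulrA e mulr0.
rewrite dvdp_mul2r // => /dvdpP [t et].
have : g1 * (g1 * f') %| g1 * (c1 + t * g1 * w).
  by apply: (dvdp_cong H1); rewrite ?ef ?et ?e2; ring.
rewrite dvdp_mul2l // => H3.
have : g1 %| c1.
  have := dvdp_trans (dvdp_mulr f' (dvdpp g1)) H3.
  by rewrite dvdp_addl // dvdp_mulr // dvdp_mull.
move=> /dvdpP [s es].
have : g1 * f' %| g1 * (s + t * w) by apply: (dvdp_cong H3); rewrite ?es; ring.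
rewrite dvdp_mul2l // => H4.
have : f' %| t + s * w.
  apply: (dvdp_eqr (x := (s + t * w) * w + t * (1 + w) ^+ 2 - (t * w + t * w) - (t * w ^+ 2 + t * w ^+ 2))).
    by ring.
  by rewrite !xx !subr0 dvdp_add //; [exact: dvdp_mulr | exact: dvdp_mull].
move=> /dvdpP [b eb].
exists s, b; congr pair; first by rewrite -es modp_small.
have -> : s * g2 + b * g3 = g1 * (b * f') + s * (g1 * w) by rewrite e2 e3; ring.
rewrite -eb; have -> : g1 * (t + s * w) + s * (g1 * w) = t * g1 + g1 * (s * w + s * w) by ring.
by rewrite xx mulr0 addr0 -et modp_small.
Qed.

Lemma inC f g1 g2 g3 a b : code_of_rows f g1 g2 g3 ((a * g1) %% f, (a * g2 + b * g3) %% f).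
Proof. by exists a, b. Qed.

Lemma indual f g1 g2 g3 X Y : f != 0 ->
  (forall a b, f %| X * (a * g1) + Y * (a * g2 + b * g3)) ->
  dual_code f (code_of_rows f g1 g2 g3) (X %% f, Y %% f).
Proof.
move=> f0 H; split; rewrite /inA /= ?ltn_modp //.
by move=> d [a [b ->]] /=; apply/modp_eq0P; rewrite dvd_mod2.
Qed.

Lemma orth f g1 g2 g3 : self_dual f (code_of_rows f g1 g2 g3) ->
  forall a b a' b', f %| (a * g1) * (a' * g1) + (a * g2 + b * g3) * (a' * g2 + b' * g3).
Proof.
move=> SD a b a' b'; have [_ _ H] := (SD _).1 (inC f g1 g2 g3 a b).
by have /modp_eq0P := H _ (inC f g1 g2 g3 a' b'); rewrite dvd_mod2.
Qed.

Lemma fromC f g1 g2 g3 X Y : f != 0 -> self_dual f (code_of_rows f g1 g2 g3) ->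
  (forall a b, f %| X * (a * g1) + Y * (a * g2 + b * g3)) ->
  exists a b, X %% f = (a * g1) %% f /\ Y %% f = (a * g2 + b * g3) %% f.
Proof.
move=> f0 SD H; have := (SD _).2 (indual f0 H).
by case=> a [b [e1 e2]]; exists a, b.
Qed.

End Code.

Unset Implicit Arguments.
Unset Strict Implicit.

Lemma size_arith (a b c d e : nat) : ((b + c).-1 <= (d + c).-2)%N ->
  (0 < e)%N = true -> (0 < d)%N = true -> (0 < c)%N = true -> (0 < b)%N = true ->
  (0 < a)%N = true -> ((a + e).-1 <= maxn 1 b)%N -> (a <= d.-1 - e.-1)%N.
Proof.
move=> sz /idP He /idP Hd /idP Hc /idP Hb /idP Ha; rewrite leq_max => /orP [H1 | H1];
  move: sz H1; rewrite -!subn1 => sz H1; lia.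
Qed.

Theorem mainTheorem10 (F : finFieldType) (f g1 g2 g3 : {poly F}) :
  2%N \in [pchar F] ->
  f \is monic ->
  g1 \is monic -> g1 %| f ->
  g3 \is monic -> g3 %| f ->
  g3 %| (f %/ g1) * g2 ->
  (size g2 <= (size g3).-1)%N ->
  self_dual f (code_of_rows f g1 g2 g3) <->
  ((g1 = g3 /\ g2 = 0 /\ f = g1 ^+ 2) \/
   (exists f' h : {poly F},
      [/\ f = g1 ^+ 2 * f', g3 = g1 * f',
          g2 = g1 * (h * sqrt2 f' + 1) &
          (size h <= (size f').-1 - (size (sqrt2 f')).-1)%N])).
Proof.
move=> c2 mf mg1 dg1 mg3 dg3 dz sz.
have f0 := monic_neq0 mf; have g10 := monic_neq0 mg1; have g30 := monic_neq0 mg3.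
have xx' := xx c2.
have oppE (x : {poly F}) : - x = x by rewrite -[LHS]add0r -(xx' x) addrK.
split; last first.
  case=> [[e13 [e2 ef]] | [f' [h [ef e3 e2 hs]]]].
    apply: (sd_form c2 (f' := 1) (w := 0) f0); rewrite ?mulr1 ?mulr0 ?addr0 ?expr1n ?dvdpp //.
  apply: (sd_form c2 (f' := f') (w := h * sqrt2 f' + 1) f0) => //.
  have f'0 : f' != 0 by apply: contraNneq f0 => e; rewrite ef e mulr0.
  rewrite addrC -addrA xx' addr0 exprMn; apply: dvdp_mull; exact: sqrt2_dvd.
move=> SD; have orth := orth SD.
have F1 : f %| g3 * g3 by apply: (dvdp_cong (orth 0 1 0 1) erefl); ring.
have F2 : f %| g2 * g3 by apply: (dvdp_cong (orth 1 0 0 1) erefl); ring.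
have F3 : f %| g1 * g1 + g2 * g2 by apply: (dvdp_cong (orth 1 0 1 0) erefl); ring.
case/dvdpP: (dg1) => u1 eu1; case/dvdpP: (dg3) => u3 eu3.
rewrite eu1 mulpK // in dz.
have u30 : u3 != 0 by apply: contraNneq f0 => e; rewrite eu3 e mul0r.
have : u3 * g3 %| g3 * g3 by rewrite -eu3.
rewrite dvdp_mul2r // => /dvdpP [t0 et0].
have : u3 * g3 %| g2 * g3 by rewrite -eu3.
rewrite dvdp_mul2r // => /dvdpP [w ew].
have [a4 [b4 [e4 _]]] := fromC f0 SD (X := u1) (Y := 0)
   (fun a b => ltac:(rewrite mul0r addr0 {1}eu1; apply/dvdpP; exists a; ring)).
have : g1 %| u1 by rewrite (mod_eq_dvd e4 dg1) dvdp_mull.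
case/dvdpP => f' ef'.
case/dvdpP: dz => z ez.
have ZZ : z * g1 = u3 * g2.
  have E : (z * g1 + u3 * g2) * g3 = (z * g3 - u1 * g2) * g1 + (u1 * g1) * g2 + (u3 * g3) * g2 by ring.
  have : (z * g1 + u3 * g2) * g3 == 0 by rewrite E -ez subrr mul0r add0r -eu1 -eu3 xx'.
  by rewrite mulf_eq0 (negPf g30) orbF addr_eq0 oppE => /eqP.
have [a5 [b5 [e5 _]]] := fromC f0 SD (X := z) (Y := u3)
   (fun a b => ltac:(rewrite (_ : z * (a * g1) + u3 * (a * g2 + b * g3) = a * (z * g1) + a * (u3 * g2) + b * (u3 * g3)); [rewrite ZZ -mulrDr xx' mulr0 add0r -eu3; exact: dvdp_mull | ring])).
have : g1 %| z by rewrite (mod_eq_dvd e5 dg1) dvdp_mull.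
case/dvdpP => a0 ez0.
subst f u1 g3 g2 z.
have g1sq0 : g1 * g1 != 0 by rewrite mulf_neq0.
have E3 : g1 * g1 + w * u3 * (w * u3) = (1 + w * a0) * (g1 * g1) + w * (u3 * (w * u3) - a0 * g1 * g1) by ring.
rewrite -ZZ subrr mulr0 addr0 in E3.
have : f' * (g1 * g1) %| (1 + w * a0) * (g1 * g1) by apply: (dvdp_cong F3) => //; ring.
rewrite dvdp_mul2r // => /dvdpP [k ek].
have cop : coprimep f' a0.
  apply/Bezout_coprimepP; exists (k, -w) => /=.
  by rewrite -ek (_ : 1 + w * a0 + - w * a0 = 1) ?eqpxx //; ring.
have H6 : forall a b, f' * g1 * g1 %| 0 * (a * g1) + f' * u3 * (a * (w * u3) + b * (t0 * u3)).
  move=> a b; rewrite (_ : 0 * (a * g1) + f' * u3 * (a * (w * u3) + b * (t0 * u3)) = a * f' * (u3 * (w * u3)) + b * f' * (u3 * (t0 * u3))); last ring.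
  rewrite -ZZ -eu3; apply: (dvdp_cong (dvdp_mull (a * a0 + b * f') (dvdpp (f' * g1 * g1))) erefl); ring.
have [a6 [b6 [e6 e6']]] := fromC f0 SD H6.
rewrite mod0p in e6.
have : f' * g1 * g1 %| a6 * g1 by apply/modp_eq0P; rewrite -e6.
rewrite dvdp_mul2r // => /dvdpP [k6 ek6].
have d3 : t0 * u3 %| f' * u3.
  rewrite (mod_eq_dvd e6' dg3) dvdp_addl; last exact: dvdp_mull.
  rewrite ek6 -mulrA ez; exact: dvdp_mull (dvdp_mull _ (dvdpp _)).
have : f' * (g1 * g1) %| (t0 * a0) * (g1 * g1).
  apply: (dvdp_cong F2); first ring.
  rewrite (_ : w * u3 * (t0 * u3) = t0 * (u3 * (w * u3))); last ring.
  rewrite -ZZ; ring.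
rewrite dvdp_mul2r // (Gauss_dvdpl _ cop) => /dvdpP [t1 et1].
subst t0.
have mf' : f' \is monic by move: mf; rewrite monicMr // monicMr.
have f'0 : f' != 0 by exact: monic_neq0.
have mu3 : u3 \is monic by move: mf; rewrite eu3 monicMr.
have G : t1 * f' * u3 = f' * u3.
  apply/eqP; rewrite -eqp_monic // ?monicMr // /eqp d3 /=.
  by apply/dvdpP; exists t1; ring.
rewrite G in eu3 mg3 sz *.
have : (f' * u3 + f' * g1) ^+ 2 == 0.
  have E : (f' * u3 + f' * g1) ^+ 2 = f' * (u3 * (f' * u3) + f' * g1 * g1) + (f' * u3 * (f' * g1) + f' * u3 * (f' * g1)) by ring.
  by rewrite E -eu3 !xx' mulr0 addr0.
rewrite expf_eq0 /= addr_eq0 oppE => /eqP /(mulfI f'0) eu.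
subst u3.
have dw : f' %| (1 + w) ^+ 2.
  have : f' * (g1 * g1) %| (1 + w) ^+ 2 * (g1 * g1).
    apply: (dvdp_cong F3); first ring.
    have E : (1 + w) ^+ 2 * (g1 * g1) = g1 * g1 + w * g1 * (w * g1) + (w * (g1 * g1) + w * (g1 * g1)) by ring.
    by rewrite E xx' addr0.
  by rewrite dvdp_mul2r.
case: (eqVneq w 0) => [w0 | wn0].
  subst w; rewrite addr0 expr1n dvdp1 in dw.
  have ef1 : f' = 1.
    by move/size_poly1P: dw mf' => [c c0 ->]; rewrite monicE lead_coefC => /eqP ->.
  subst f'; left; split; [ring | split; ring].
right; have /dvdpP [h eh] := sqrt2_min f'0 dw.
exists f', h; split.
- ring.
- ring.
- by rewrite -eh addrC addrA xx' add0r mulrC.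
have [ms _] := sqrt2_spec f'0; have s0 := monic_neq0 ms.
have [->|h0] := eqVneq h 0; first by rewrite size_poly0.
rewrite !size_mul // in sz.
have := size_polyD 1 w; rewrite eh size_mul // size_poly1.
have := size_poly_gt0 h; have := size_poly_gt0 w; have := size_poly_gt0 g1;
have := size_poly_gt0 f'; have := size_poly_gt0 (sqrt2 f').
rewrite h0 wn0 g10 f'0 s0.
move: (size h) (size w) (size g1) (size f') (size (sqrt2 f')) sz => a b c d e sz.
exact: size_arith.
Qed.
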